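(* Let $n$ be a positive integer and $\alpha,\beta\in\mathbb{R}$. Put $M=T_n\cdot\max\{1,n^{2\beta}\}\cdot\max_{1\le i\le n}|J_{\alpha-\beta}(i)|$. Then every eigenvalue of $A_n^{\alpha,\beta}$ lies in the real interval \[ \Big[\,2\min\{1,n^{\alpha+\beta}\}-M\ ,\ M\,\Big]. \]
   Context: For $i,j$ positive integers, $(i,j)$ denotes the greatest common divisor and $[i,j]$ the least common multiple. For $\alpha,\beta\in\mathbb{R}$ and a positive integer $n$, $A_n^{\alpha,\beta}$ is the $n\times n$ real matrix with $(i,j)$ entry $(i,j)^{\alpha}[i,j]^{\beta}$. $E_n$ is the $n\times n$ matrix with $(E_n)_{ij}=1$ if $j\mid i$ and $(E_n)_{ij}=0$ otherwise; $t_n$ denotes the smallest eigenvalue and $T_n$ the largest eigenvalue of the symmetric matrix $E_n^{T}E_n$. For real $s$, $J_s$ is the arithmetical function $J_s(k)=k^{s}\prod_{p\mid k}\left(1-p^{-s}\right)$ (product over primes $p$ dividing $k$), equivalently $J_s(k)=\sum_{d\mid k} d^{s}\mu(k/d)$ where $\mu$ is the Möbius function. *)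

(* Defs.v *)
From Stdlib Require Import Reals Arith ZArith Znumtheory.
Open Scope R_scope.

Fixpoint rsum (n : nat) (f : nat -> R) : R :=
  match n with 0%nat => 0 | S m => rsum m f + f (S m) end.

Fixpoint rprod (n : nat) (f : nat -> R) : R :=
  match n with 0%nat => 1 | S m => rprod m f * f (S m) end.

(* max_{1<=k<=n} f k, for nonnegative f (value 0 when n = 0) *)
Fixpoint rmaxn (n : nat) (f : nat -> R) : R :=
  match n with 0%nat => 0 | S m => Rmax (rmaxn m f) (f (S m)) end.

(* n x n real matrices, indices 1..n *)
Definition rmat := nat -> nat -> R.

Definition is_eigenvalue (n : nat) (A : rmat) (lam : R) : Prop :=
  exists x : nat -> R,
    (exists i, (1 <= i <= n)%nat /\ x i <> 0) /\
    forall i, (1 <= i <= n)%nat -> rsum n (fun j => A i j * x j) = lam * x i.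

Definition is_largest_eigenvalue (n : nat) (A : rmat) (T : R) : Prop :=
  is_eigenvalue n A T /\ forall mu, is_eigenvalue n A mu -> mu <= T.

Definition Amat (alpha beta : R) : rmat :=
  fun i j => Rpower (INR (Nat.gcd i j)) alpha * Rpower (INR (Nat.lcm i j)) beta.

Definition Emat : rmat :=
  fun i j => if Nat.eqb (i mod j) 0 then 1 else 0.

Definition EtE (n : nat) : rmat :=
  fun i j => rsum n (fun k => Emat k i * Emat k j).

Definition Jordan (s : R) (k : nat) : R :=
  Rpower (INR k) s *
  rprod k (fun p => if prime_dec (Z.of_nat p) then
                      (if Nat.eqb (k mod p) 0 then 1 - Rpower (INR p) (- s) else 1)
                    else 1).

(* Main.v *)
Set Warnings "-notation-overridden,-ambiguous-paths,-notation-incompatible-prefix".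
From Stdlib Require Import Reals Lra Lia ZArith Znumtheory.
From mathcomp Require Import all_boot all_algebra zify.
From mathcomp Require Import Rstruct.
Require Import Defs.
Open Scope R_scope.
Set Bullet Behavior "Strict Subproofs".
Lemma rsum_ext (n : nat) (f g : nat -> R) : (forall k, (1 <= k /\ k <= n)%coq_nat -> f k = g k) -> rsum n f = rsum n g.
Proof.
induction n as [|n IH]; intros H; simpl; [reflexivity|].
rewrite IH; [rewrite (H (S n)); [reflexivity|lia]|].
intros k Hk; apply H; lia.
Qed.

Lemma rsum_plus (n : nat) (f g : nat -> R) : rsum n (fun k => f k + g k) = rsum n f + rsum n g.
Proof. induction n; simpl; [lra|rewrite IHn; lra]. Qed.

Lemma rsum_minus (n : nat) (f g : nat -> R) : rsum n (fun k => f k - g k) = rsum n f - rsum n g.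
Proof. induction n; simpl; [lra|rewrite IHn; lra]. Qed.

Lemma rsum_scal n c f : rsum n (fun k => c * f k) = c * rsum n f.
Proof. induction n; simpl; [lra|rewrite IHn; lra]. Qed.

Lemma rsum_scalr n c f : rsum n (fun k => f k * c) = rsum n f * c.
Proof. induction n; simpl; [lra|rewrite IHn; lra]. Qed.

Lemma rsum_zero n : rsum n (fun _ => 0) = 0.
Proof. induction n; simpl; [lra|rewrite IHn; lra]. Qed.

Lemma rsum_le (n : nat) (f g : nat -> R) : (forall k, (1 <= k /\ k <= n)%coq_nat -> f k <= g k) -> rsum n f <= rsum n g.
Proof.
induction n as [|n IH]; intros H; simpl; [lra|].
assert (rsum n f <= rsum n g) by (apply IH; intros; apply H; lia).
assert (f (S n) <= g (S n)) by (apply H; lia). lra.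
Qed.

Lemma rsum_nonneg (n:nat) (f : nat -> R) : (forall k, (1 <= k /\ k <= n)%coq_nat -> 0 <= f k) -> 0 <= rsum n f.
Proof.
intros H; rewrite <- (rsum_zero n); apply rsum_le; auto.
Qed.

Lemma rsum_swap n m (f : nat -> nat -> R) :
  rsum n (fun i => rsum m (fun j => f i j)) = rsum m (fun j => rsum n (fun i => f i j)).
Proof.
induction n as [|n IH]; simpl.
- now rewrite rsum_zero.
- rewrite IH rsum_plus; reflexivity.
Qed.

Lemma rsum_abs n f : Rabs (rsum n f) <= rsum n (fun k => Rabs (f k)).
Proof.
induction n; simpl; [rewrite Rabs_R0; lra|].
eapply Rle_trans; [apply Rabs_triang|lra].
Qed.

Lemma rsum_delta (n i : nat) (c : R) : (1 <= i /\ i <= n)%coq_nat ->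
  rsum n (fun j => if Nat.eqb i j then c else 0) = c.
Proof.
induction n as [|n IH]; intros Hi; [lia|simpl].
destruct (Nat.eqb i (S n)) eqn:E.
- apply Nat.eqb_eq in E; subst.
  rewrite (rsum_ext n _ (fun _ => 0)); [rewrite rsum_zero; lra|].
  intros k Hk; destruct (Nat.eqb (S n) k) eqn:E2; [apply Nat.eqb_eq in E2; lia|reflexivity].
- apply Nat.eqb_neq in E. rewrite IH; [lra|lia].
Qed.

Lemma rsum_extend (N m : nat) (f : nat -> R) : (m <= N)%coq_nat -> (forall k, (m < k)%coq_nat -> f k = 0) ->
  rsum N f = rsum m f.
Proof.
intros HmN Hf; induction HmN; [reflexivity|simpl; rewrite IHHmN Hf; [lra|lia]].
Qed.

Lemma rsum_add (a b : nat) (f : nat -> R) : rsum (a + b)%nat f = rsum a f + rsum b (fun i => f (a + i)%nat).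
Proof.
induction b as [|b IH]; simpl.
- rewrite addn0; lra.
- rewrite addnS; simpl; rewrite IH; lra.
Qed.

Definition nrm n (w : nat -> R) := rsum n (fun i => w i * w i).
Definition bil n (B : rmat) (a b : nat -> R) :=
  rsum n (fun i => a i * rsum n (fun j => B i j * b j)).

Lemma nrm_nonneg n w : 0 <= nrm n w.
Proof. apply rsum_nonneg; intros; nra. Qed.
Lemma bil_addl n B a b c : bil n B (fun i => a i + b i) c = bil n B a c + bil n B b c.
Proof. unfold bil; rewrite <- rsum_plus; apply rsum_ext; intros; ring. Qed.

Lemma bil_addr n B a b c : bil n B a (fun i => b i + c i) = bil n B a b + bil n B a c.
Proof.
unfold bil; rewrite <- rsum_plus; apply rsum_ext; intros.
rewrite <- Rmult_plus_distr_l; f_equal; rewrite <- rsum_plus; apply rsum_ext; intros; ring.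
Qed.

Lemma bil_scall n B t a c : bil n B (fun i => t * a i) c = t * bil n B a c.
Proof. unfold bil; rewrite <- rsum_scal; apply rsum_ext; intros; ring. Qed.

Lemma bil_scalr n B t a c : bil n B a (fun i => t * c i) = t * bil n B a c.
Proof.
unfold bil; rewrite <- rsum_scal; apply rsum_ext; intros.
rewrite (rsum_ext n (fun j => B k j * (t * c j)) (fun j => t * (B k j * c j))).
- rewrite rsum_scal; ring.
- intros; ring.
Qed.

Definition symm n (B : rmat) := forall i j, (1 <= i /\ i <= n)%coq_nat -> (1 <= j /\ j <= n)%coq_nat -> B i j = B j i.

Lemma bil_sym n B a b : symm n B -> bil n B a b = bil n B b a.
Proof.
intros HB; unfold bil.
rewrite (rsum_ext n (fun i => a i * rsum n (fun j => B i j * b j)) (fun i => rsum n (fun j => a i * B i j * b j))).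
2:{ intros; rewrite <- rsum_scal; apply rsum_ext; intros; ring. }
rewrite rsum_swap; apply rsum_ext; intros i Hi.
rewrite <- rsum_scal; apply rsum_ext; intros j Hj. rewrite (HB j i); auto; ring.
Qed.

Lemma bil_expand n B a b t : symm n B ->
  bil n B (fun i => a i + t * b i) (fun i => a i + t * b i) =
  bil n B a a + 2 * t * bil n B a b + t * t * bil n B b b.
Proof.
intros HB.
rewrite bil_addl !bil_addr !bil_scall !bil_scalr (bil_sym n B b a HB); ring.
Qed.

Lemma bil_CS n B a b : symm n B -> (forall w, 0 <= bil n B w w) ->
  bil n B a b * bil n B a b <= bil n B a a * bil n B b b.
Proof.
intros HB Hpos.
set (al := bil n B a a); set (be := bil n B a b); set (ga := bil n B b b).
assert (Ht : forall t, 0 <= al + 2 * t * be + t * t * ga).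
{ intros t; pose proof (bil_expand n B a b t HB) as E; fold al be ga in E; rewrite <- E; apply Hpos. }
assert (Hg : 0 <= ga) by apply Hpos.
assert (Ha : 0 <= al) by apply Hpos.
destruct (Rle_lt_or_eq_dec 0 ga Hg) as [Hg'|Hg'].
- specialize (Ht (- be / ga)).
  assert (E : al + 2 * (- be / ga) * be + - be / ga * (- be / ga) * ga = al - be * be / ga)
    by (field; lra).
  rewrite E in Ht.
  assert (be * be / ga <= al) by lra.
  apply (Rmult_le_compat_r ga) in H; [|lra].
  unfold Rdiv in H; rewrite Rmult_assoc Rinv_l in H; lra.
- rewrite <- Hg'. 
  destruct (Req_dec be 0) as [Hb|Hb]; [rewrite Hb; lra|].
  specialize (Ht (- (al + 1) / (2 * be))).
  rewrite <- Hg' in Ht.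
  assert (E : al + 2 * (- (al + 1) / (2 * be)) * be = -1) by (field; lra).
  lra.
Qed.
Lemma big_rsum (n : nat) (G : nat -> R) : (\sum_(i < n) G i.+1)%R = rsum n G.
Proof.
induction n as [|n IH]; [by rewrite big_ord0|].
by rewrite big_ord_recr /= IH.
Qed.

Lemma kernel_or_inverse (n : nat) (B : rmat) : (1 <= n)%coq_nat ->
  (exists x : nat -> R, (exists i, (1 <= i /\ i <= n)%coq_nat /\ x i <> 0) /\
     forall j, (1 <= j /\ j <= n)%coq_nat -> rsum n (fun i => x i * B i j) = 0) \/
  (exists C : rmat, forall i j, (1 <= i /\ i <= n)%coq_nat -> (1 <= j /\ j <= n)%coq_nat ->
     rsum n (fun k => B i k * C k j) = if Nat.eqb i j then 1 else 0).
Proof.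
destruct n as [|n]; [lia|intros _].
set M : 'M[R]_n.+1 := (\matrix_(i < n.+1, j < n.+1) B i.+1 j.+1)%R.
case: (boolP ((\det M)%R == 0%R)) => Hdet.
- left. move/det0P: Hdet => [v Hv HvM].
  exists (fun k => v ord0 (inord k.-1)). split.
  + case: (boolP [exists i, v ord0 i != 0%R]).
    * move/existsP => [i Hi]. exists i.+1. split; [move: (ltn_ord i); lia|].
      rewrite /= inord_val. by move/eqP: Hi.
    * rewrite negb_exists => /forallP Hall. exfalso. move/negP: Hv; apply.
      apply/eqP/matrixP => i0 i. rewrite !mxE. rewrite (ord1 i0). have := Hall i. rewrite negbK => /eqP ->.
      done.
  + move=> j Hj. have H := congr1 (fun A : 'M[R]_(1, n.+1) => A ord0 (inord j.-1)) HvM.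
    rewrite /= !mxE in H. rewrite -(big_rsum n.+1) -[RHS]H.
    apply: eq_bigr => i _. rewrite /M mxE /= inord_val inordK; last by lia.
    by have -> : j.-1.+1 = j by lia.
- right. have Hu : M \in unitmx by rewrite unitmxE GRing.unitfE.
  set C := invmx M.
  exists (fun a b => C (inord a.-1) (inord b.-1)).
  move=> i j Hi Hj.
  have H := congr1 (fun A : 'M[R]_(n.+1) => A (inord i.-1) (inord j.-1)) (mulmxV Hu).
  rewrite /= !mxE in H. rewrite -(big_rsum n.+1).
  have Hij : (inord i.-1 == inord j.-1 :> 'I_n.+1) = Nat.eqb i j.
  { apply/eqP; case: (Nat.eqb_spec i j) => Hij.
    + by rewrite Hij.
    + move/eqP; rewrite -val_eqE /= !inordK; lia. }
  rewrite -Hij.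
  have -> : (if (inord i.-1 == inord j.-1 :> 'I_n.+1) then 1 else 0) = ((inord i.-1 == inord j.-1 :> 'I_n.+1)%:R)%R
    by case: (_ == _).
  rewrite -H.
  apply: eq_bigr => k _. rewrite /M mxE /= inord_val inordK; last by lia.
  by have -> : i.-1.+1 = i by lia.
Qed.
Lemma Rabs_le_inv (x b : R) : Rabs x <= b -> - b <= x <= b.
Proof. unfold Rabs; destruct (Rcase_abs x); lra. Qed.

Lemma rsum_ge_term (n i : nat) (f : nat -> R) : (forall k, (1 <= k /\ k <= n)%coq_nat -> 0 <= f k) ->
  (1 <= i /\ i <= n)%coq_nat -> f i <= rsum n f.
Proof.
induction n as [|n IH]; intros Hf Hi; [lia|simpl].
destruct (Nat.eq_dec i (S n)) as [->|Hne].
- assert (0 <= rsum n f) by (apply rsum_nonneg; intros; apply Hf; lia). lra.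
- assert (f i <= rsum n f) by (apply IH; [intros; apply Hf|]; lia).
  assert (0 <= f (S n)) by (apply Hf; lia). lra.
Qed.

Lemma nrm_coord n w i : (1 <= i /\ i <= n)%coq_nat -> w i * w i <= nrm n w.
Proof. intros Hi; apply (rsum_ge_term n i (fun k => w k * w k)); [intros; nra|auto]. Qed.

Lemma rsum_delta_mul (n i : nat) (c : R) (b : nat -> R) : (1 <= i /\ i <= n)%coq_nat ->
  rsum n (fun j => (if Nat.eqb i j then c else 0) * b j) = c * b i.
Proof.
intros Hi. rewrite <- (rsum_delta n i (c * b i) Hi). apply rsum_ext; intros j Hj.
destruct (Nat.eqb_spec i j); [subst; ring|ring].
Qed.

Definition Kabs n (B : rmat) := rsum n (fun i => rsum n (fun j => Rabs (B i j))).

Lemma bil_bound n B w : (forall i, (1 <= i /\ i <= n)%coq_nat -> Rabs (w i) <= 1) ->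
  Rabs (bil n B w w) <= Kabs n B.
Proof.
intros Hw. unfold bil, Kabs. eapply Rle_trans; [apply rsum_abs|].
apply rsum_le; intros i Hi. rewrite Rabs_mult.
eapply Rle_trans.
{ apply Rmult_le_compat_r; [apply Rabs_pos|apply (Hw i Hi)]. }
rewrite Rmult_1_l. eapply Rle_trans; [apply rsum_abs|].
apply rsum_le; intros j Hj. rewrite Rabs_mult.
pose proof (Hw j Hj); pose proof (Rabs_pos (B i j)); pose proof (Rabs_pos (w j)). nra.
Qed.

Lemma unit_coord n w : nrm n w = 1 -> forall i, (1 <= i /\ i <= n)%coq_nat -> Rabs (w i) <= 1.
Proof.
intros Hn i Hi. pose proof (nrm_coord n w i Hi) as H. rewrite Hn in H.
destruct (Rle_dec (Rabs (w i)) 1) as [|Hc]; [auto|].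
exfalso. assert (Rabs (w i) * Rabs (w i) = w i * w i) by (rewrite <- Rabs_mult; apply Rabs_right; nra).
nra.
Qed.

Lemma nrm_zero n w : nrm n w = 0 -> forall i, (1 <= i /\ i <= n)%coq_nat -> w i = 0.
Proof.
intros Hn i Hi. pose proof (nrm_coord n w i Hi). rewrite Hn in H. nra.
Qed.

Lemma bil_zero n B w : nrm n w = 0 -> bil n B w w = 0.
Proof.
intros Hn. unfold bil. rewrite <- (rsum_zero n). apply rsum_ext; intros i Hi.
rewrite (nrm_zero n w Hn i Hi); ring.
Qed.

Lemma nrm_scal n c w : nrm n (fun i => c * w i) = c * c * nrm n w.
Proof. unfold nrm; rewrite <- rsum_scal; apply rsum_ext; intros; ring. Qed.

Definition e1 (k : nat) : R := if Nat.eqb 1 k then 1 else 0.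

Lemma nrm_e1 n : (1 <= n)%coq_nat -> nrm n e1 = 1.
Proof.
intros Hn. unfold nrm. rewrite <- (rsum_delta n 1 1); [|lia].
apply rsum_ext; intros; unfold e1; destruct (Nat.eqb 1 k); ring.
Qed.

Definition shiftm (mu : R) (S : rmat) : rmat := fun i j => (if Nat.eqb i j then mu else 0) - S i j.

Lemma bil_shiftm n mu S a b : bil n (shiftm mu S) a b = mu * rsum n (fun i => a i * b i) - bil n S a b.
Proof.
unfold bil, shiftm. rewrite <- rsum_scal, <- rsum_minus. apply rsum_ext; intros i Hi.
rewrite (rsum_ext n _ (fun j => (if Nat.eqb i j then mu else 0) * b j - S i j * b j)); [|intros; ring].
rewrite rsum_minus rsum_delta_mul; auto; ring.
Qed.

Lemma rayleigh n S : (1 <= n)%coq_nat -> symm n S ->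
  exists mu, is_eigenvalue n S mu /\ forall w, bil n S w w <= mu * nrm n w.
Proof.
intros Hn HS.
set (E := fun x => exists w, nrm n w = 1 /\ bil n S w w = x).
assert (Hb : bound E).
{ exists (Kabs n S). intros x [w [Hw1 Hw2]]. subst x.
  pose proof (bil_bound n S w (unit_coord n w Hw1)). apply Rabs_le_inv in H. lra. }
assert (Hne : exists x, E x) by (exists (bil n S e1 e1); exists e1; split; [apply nrm_e1|]; auto).
destruct (completeness E Hb Hne) as [mu [Hub Hlub]].
assert (Hq : forall w, bil n S w w <= mu * nrm n w).
{ intros w. destruct (Req_dec (nrm n w) 0) as [H0|H0].
  - rewrite (bil_zero n S w H0) H0; lra.
  - pose proof (nrm_nonneg n w) as Hp.
    set (c := / sqrt (nrm n w)).
    assert (Hs : 0 < sqrt (nrm n w)) by (apply sqrt_lt_R0; lra).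
    assert (Hc2 : c * c * nrm n w = 1).
    { unfold c. rewrite <- Rinv_mult, sqrt_sqrt; [field|]; lra. }
    assert (Hcp : 0 < c * c) by (unfold c; apply Rmult_lt_0_compat; apply Rinv_0_lt_compat; lra).
    assert (HE : E (bil n S (fun i => c * w i) (fun i => c * w i))).
    { exists (fun i => c * w i); split; [rewrite nrm_scal; auto|auto]. }
    pose proof (Hub _ HE) as Hle. rewrite bil_scall bil_scalr in Hle.
    assert (E2 : c * c * (mu * nrm n w) = mu).
    { transitivity (mu * (c * c * nrm n w)); [ring|rewrite Hc2; ring]. }
    assert (c * c * bil n S w w <= c * c * (mu * nrm n w)) by lra.
    apply Rmult_le_reg_l in H; lra. }
exists mu; split; [|exact Hq].
assert (Hsym : symm n (shiftm mu S)).
{ intros i j Hi Hj; unfold shiftm. rewrite (HS i j Hi Hj).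
  destruct (Nat.eqb_spec i j), (Nat.eqb_spec j i); try lia; reflexivity. }
assert (Hpsd : forall v, 0 <= bil n (shiftm mu S) v v).
{ intros v. rewrite bil_shiftm. pose proof (Hq v). unfold nrm in H. lra. }
destruct (kernel_or_inverse n (shiftm mu S) Hn) as [[x [Hx Hker]]|[C HC]].
- exists x; split; [auto|]. intros i Hi.
  pose proof (Hker i Hi) as H. unfold shiftm in H.
  rewrite (rsum_ext n _ (fun j => (if Nat.eqb i j then mu else 0) * x j - S i j * x j)) in H.
  2:{ intros j Hj. rewrite (HS j i Hj Hi). destruct (Nat.eqb_spec j i), (Nat.eqb_spec i j); try lia; ring. }
  rewrite rsum_minus rsum_delta_mul in H; auto. lra.
- exfalso.
  set (K := Kabs n C).
  assert (Hkey : forall w, nrm n w = 1 -> 1 <= bil n (shiftm mu S) w w * K).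
  { intros w Hw.
    set (z := fun i => rsum n (fun j => C i j * w j)).
    assert (HBz : forall i, (1 <= i /\ i <= n)%coq_nat -> rsum n (fun k => shiftm mu S i k * z k) = w i).
    { intros i Hi. unfold z.
      rewrite (rsum_ext n _ (fun k => rsum n (fun j => shiftm mu S i k * C k j * w j))).
      2:{ intros k Hk; rewrite <- rsum_scal; apply rsum_ext; intros; ring. }
      rewrite rsum_swap.
      rewrite (rsum_ext n _ (fun j => (if Nat.eqb i j then 1 else 0) * w j)).
      2:{ intros j Hj. rewrite rsum_scalr HC; auto. }
      rewrite rsum_delta_mul; auto; ring. }
    assert (H1 : bil n (shiftm mu S) w z = 1).
    { unfold bil. rewrite <- Hw. unfold nrm. apply rsum_ext; intros i Hi; rewrite HBz; auto. }
    assert (H2 : bil n (shiftm mu S) z z = bil n C w w).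
    { unfold bil. rewrite (rsum_ext n _ (fun i => z i * w i)).
      2:{ intros i Hi; rewrite HBz; auto. }
      apply rsum_ext; intros; unfold z; ring. }
    assert (H3 : bil n C w w <= K).
    { pose proof (bil_bound n C w (unit_coord n w Hw)). apply Rabs_le_inv in H. unfold K; lra. }
    pose proof (bil_CS n (shiftm mu S) w z Hsym Hpsd) as HCS.
    rewrite H1 H2 in HCS. pose proof (Hpsd w). nra. }
  assert (HK : 0 < K).
  { pose proof (Hkey e1 (nrm_e1 n Hn)). pose proof (Hpsd e1).
    destruct (Rle_dec K 0); [nra|lra]. }
  assert (Hub2 : is_upper_bound E (mu - / K)).
  { intros x [w [Hw1 Hw2]]. subst x. pose proof (Hkey w Hw1) as H.
    rewrite bil_shiftm in H. fold (nrm n w) in H. rewrite Hw1 in H.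
    assert (/ K <= mu - bil n S w w).
    { apply (Rmult_le_reg_r K); [lra|]. rewrite Rinv_l; lra. }
    lra. }
  pose proof (Hlub _ Hub2). pose proof (Rinv_0_lt_compat K HK). lra.
Qed.
Lemma dvdn_divide (d m : nat) : d %| m <-> Nat.divide d m.
Proof.
split.
- move/dvdnP => [q ->]. exists q. by rewrite multE.
- move=> [q Hq]. apply/dvdnP. exists q. by rewrite -multE.
Qed.

Lemma eqb_mod_dvdn (i k : nat) : Nat.eqb (i mod k) 0 = (k %| i).
Proof.
apply/idP/idP.
- move/Nat.eqb_eq/Nat.Lcm0.mod_divide. by move/dvdn_divide.
- move/dvdn_divide/Nat.Lcm0.mod_divide. by move/Nat.eqb_eq.
Qed.

Lemma Zdiv_nat (d p : nat) : (0 < p)%coq_nat -> Z.divide (Z.of_nat d) (Z.of_nat p) -> Nat.divide d p.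
Proof.
intros Hp [z Hz].
assert (Hz0 : Z.le 0 z) by nia.
exists (Z.to_nat z). apply Nat2Z.inj. rewrite Nat2Z.inj_mul Z2Nat.id; auto.
Qed.

Lemma prime_bridge (p : nat) : Znumtheory.prime (Z.of_nat p) <-> prime p.
Proof.
rewrite <- prime_alt. split.
- intros [H1 H2]. apply/primeP. split; [lia|].
  intros d Hd. have Hp : (0 < p)%coq_nat by lia.
  have Hdd := proj1 (dvdn_divide d p) Hd.
  have Hle := Nat.divide_pos_le d p Hp Hdd.
  have Hd0 : d <> 0%nat.
  { intros ->. destruct Hdd as [q Hq]. lia. }
  case: (Nat.eq_dec d 1) => [->|H1d]; [done|].
  case: (Nat.eq_dec d p) => [->|Hdp]; [by rewrite eqxx orbT|].
  exfalso. apply (H2 (Z.of_nat d)); [lia|].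
  destruct Hdd as [q Hq]. exists (Z.of_nat q). rewrite Hq Nat2Z.inj_mul. reflexivity.
- move/primeP => [H1 H2]. split; [lia|].
  intros n Hn Hdiv.
  have Hn' : n = Z.of_nat (Z.to_nat n) by rewrite Z2Nat.id; lia.
  rewrite Hn' in Hdiv.
  have Hd := Zdiv_nat (Z.to_nat n) p ltac:(lia) Hdiv.
  move/dvdn_divide: Hd => Hd. move: (H2 _ Hd) => /orP [/eqP E|/eqP E]; lia.
Qed.
Lemma rprod_ext (n : nat) (f g : nat -> R) : (forall k, (1 <= k /\ k <= n)%coq_nat -> f k = g k) -> rprod n f = rprod n g.
Proof.
induction n as [|n IH]; intros H; simpl; [reflexivity|].
rewrite IH; [rewrite (H (S n)); [reflexivity|lia]|].
intros k Hk; apply H; lia.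
Qed.

Lemma rprod_mult (n : nat) (f g : nat -> R) : rprod n (fun k => f k * g k) = rprod n f * rprod n g.
Proof. induction n; simpl; [lra|rewrite IHn; ring]. Qed.

Lemma rprod_extend (N m : nat) (f : nat -> R) : (m <= N)%coq_nat -> (forall k, (m < k)%coq_nat -> f k = 1) ->
  rprod N f = rprod m f.
Proof.
intros HmN Hf; induction HmN; [reflexivity|simpl; rewrite IHHmN Hf; [lra|lia]].
Qed.

Lemma rprod_one (n : nat) : rprod n (fun _ => 1) = 1.
Proof. induction n; simpl; [lra|rewrite IHn; lra]. Qed.

Lemma rprod_delta (N p : nat) (c : R) : (1 <= p /\ p <= N)%coq_nat ->
  rprod N (fun q => if q == p then c else 1) = c.
Proof.
induction N as [|N IH]; intros Hp; [lia|simpl].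
case: (Nat.eq_dec p N.+1) => [E|E].
- subst p. rewrite eqxx. rewrite (rprod_ext N _ (fun _ => 1)); [rewrite rprod_one; lra|].
  intros k Hk. have -> : (k == N.+1) = false by apply/eqP; lia. done.
- have -> : (N.+1 == p) = false by apply/eqP; lia. rewrite IH; [lra|lia].
Qed.

Definition gf (s : R) (k p : nat) : R := if prime p && (p %| k) then 1 - Rpower (INR p) (- s) else 1.
Definition Jd (s : R) (k : nat) : R := Rpower (INR k) s * rprod k (gf s k).

Lemma Jordan_Jd s k : Jordan s k = Jd s k.
Proof.
unfold Jordan, Jd. f_equal. apply rprod_ext; intros p Hp. unfold gf.
destruct (prime_dec (Z.of_nat p)) as [H|H].
- have -> : prime p by apply/prime_bridge. by rewrite eqb_mod_dvdn.
- have -> : prime p = false. { apply/negP => Hp'. apply H. by apply/prime_bridge. }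
  done.
Qed.

Lemma gf_big s k p : (0 < k)%N -> (k < p)%coq_nat -> gf s k p = 1.
Proof.
move=> Hk Hp. rewrite /gf. have -> : (p %| k) = false.
{ apply/negP => /(dvdn_leq Hk) H. lia. }
by rewrite andbF.
Qed.

Lemma INR_pos (k : nat) : (0 < k)%N -> 0 < INR k.
Proof. move=> H. apply lt_0_INR. lia. Qed.

Lemma INR_muln (a b : nat) : INR (a * b)%N = INR a * INR b.
Proof. by rewrite -multE mult_INR. Qed.

Lemma Jd_mult s a b : (0 < a)%N -> (0 < b)%N -> coprime a b -> Jd s (a * b) = Jd s a * Jd s b.
Proof.
move=> Ha Hb Hab. rewrite /Jd INR_muln -Rpower_mult_distr; try apply INR_pos; auto.
have Hab0 : (0 < a * b)%N by rewrite muln_gt0 Ha Hb.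
rewrite (rprod_ext _ _ (fun p => gf s a p * gf s b p)).
- rewrite rprod_mult.
  rewrite (rprod_extend (a * b) a); last first.
  { intros k Hk; apply gf_big; auto. }
  { have := leq_pmulr a Hb. lia. }
  rewrite (rprod_extend (a * b) b); last first.
  { intros k Hk; apply gf_big; auto. }
  { have := leq_pmull b Ha. lia. }
  ring.
- intros p Hp. rewrite /gf. case Pp: (prime p); last by (simpl; ring).
  rewrite /= Euclid_dvdM //.
  case Da: (p %| a); case Db: (p %| b); simpl; try ring.
  exfalso. have : p %| gcdn a b by rewrite dvdn_gcd Da Db.
  move/eqP: Hab => ->. rewrite dvdn1 => /eqP E. subst p. done.
Qed.

Lemma Jd_pow s p a : prime p ->
  Jd s (p ^ a.+1) = Rpower (INR (p ^ a.+1)) s - Rpower (INR (p ^ a)) s.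
Proof.
move=> Pp. have Hp0 : (0 < p)%N by apply prime_gt0.
rewrite /Jd (rprod_ext _ _ (fun q => if q == p then 1 - Rpower (INR p) (- s) else 1)).
- rewrite rprod_delta; last first.
  { split; [lia|]. have : (p <= p ^ a.+1)%N.
    { by rewrite expnS leq_pmulr // expn_gt0 Hp0. }
    lia. }
  rewrite expnS INR_muln -Rpower_mult_distr; try apply INR_pos; auto; last by rewrite expn_gt0 Hp0.
  rewrite Rpower_Ropp. have := exp_pos (s * ln (INR p)). rewrite /Rpower. move=> H.
  field. lra.
- intros q Hq. rewrite /gf. case Pq: (prime q).
  + rewrite /= Euclid_dvdX // dvdn_prime2 //= andbT. by case: eqP => [->|].
  + have -> : (q == p) = false. { apply/eqP => E. subst q. by rewrite Pp in Pq. }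
    done.
Qed.
Definition Dsum (s : R) (N m : nat) := rsum N (fun k => if k %| m then Jd s k else 0).

Lemma Dsum_ext s N m : (0 < m)%N -> (m <= N)%coq_nat -> Dsum s N m = Dsum s m m.
Proof.
move=> Hm HN. rewrite /Dsum. apply rsum_extend; auto.
move=> k Hk. have -> : (k %| m) = false; last done.
apply/negP => /(dvdn_leq Hm). lia.
Qed.

Lemma reindex (c N : nat) (G : nat -> R) : (0 < c)%N ->
  rsum (c * N) (fun k => if c %| k then G k else 0) = rsum N (fun t => G (c * t)%N).
Proof.
move=> Hc. elim: N => [|N IH]; first by rewrite muln0.
rewrite mulnS addnC rsum_add IH /=. f_equal.
rewrite (rsum_ext c _ (fun i => if Nat.eqb c i then G (c * N.+1)%N else 0)).
- by rewrite rsum_delta; [|lia].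
- move=> i Hi. rewrite dvdn_addr; last by rewrite dvdn_mulr.
  case: (Nat.eqb_spec c i) => E.
  + subst i. by rewrite dvdnn mulnS addnC.
  + have -> : (c %| i) = false; last done.
    apply/negP => /(dvdn_leq) H. have : (c <= i)%N by apply H; lia. lia.
Qed.

Lemma split_cases (p r b k : nat) : prime p -> coprime p r -> (0 < k)%N ->
  let X := k %| p ^ b.+1 * r in let Y := k %| p ^ b * r in let Z := p ^ b.+1 %| k in
  X = Y || (Z && X) /\ ~~ (Y && Z).
Proof.
move=> Pp Hpr Hk X Y Z.
have Hp1 : (1 < p)%N by apply prime_gt1.
have YX : Y -> X. { rewrite /Y /X => H. apply: (dvdn_trans H). by rewrite expnS -mulnA dvdn_mull. }
have YnZ : ~~ (Y && Z).
{ apply/negP => /andP [HY HZ]. have H := dvdn_trans HZ HY.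
  rewrite expnS mulnC dvdn_pmul2l in H; last by rewrite expn_gt0; apply/orP; left; lia.
  move: Hpr. rewrite /coprime => /eqP Hg. have : p %| gcdn p r by rewrite dvdn_gcd dvdnn H.
  rewrite Hg dvdn1 => /eqP E. lia. }
split; last exact YnZ.
case HY: Y; first by rewrite YX.
case HZ: Z; simpl; first done.
apply/negP => HX. move/negP: HY; apply.
case: (pfactor_coprime Pp Hk) => k' Hk' Ek.
set e := logn p k in Ek.
have Hk'div : k' %| r.
{ have : k' %| k by rewrite Ek dvdn_mulr.
  move=> H1. have H2 := dvdn_trans H1 HX.
  rewrite mulnC Gauss_dvdl in H2; first done.
  apply: coprimeXr. by rewrite coprime_sym. }
have Hele : (e <= b)%N.
{ have H1 : p ^ e %| k by rewrite Ek dvdn_mull.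
  have H2 := dvdn_trans H1 HX.
  rewrite Gauss_dvdl in H2; last by apply coprimeXl.
  rewrite dvdn_Pexp2l in H2; last done.
  case: (leqP e b) => // Hlt.
  have Heq : e = b.+1 by lia.
  exfalso. move/negP: HZ; apply. by rewrite /Z Ek -Heq dvdn_mull. }
rewrite /Y Ek mulnC. apply: dvdn_mul; first by apply: dvdn_exp2l.
done.
Qed.
Lemma Dsum_step s p r b : prime p -> coprime p r -> (0 < r)%N ->
  Dsum s (p ^ b.+1 * r) (p ^ b.+1 * r) = Dsum s (p ^ b * r) (p ^ b * r) + Jd s (p ^ b.+1) * Dsum s r r.
Proof.
move=> Pp Hpr Hr.
have Hp0 : (0 < p)%N by apply prime_gt0.
have Hc : (0 < p ^ b.+1)%N by rewrite expn_gt0 Hp0.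
have Hcb : (0 < p ^ b)%N by rewrite expn_gt0 Hp0.
set c := (p ^ b.+1)%N.
rewrite {1}/Dsum.
rewrite (rsum_ext _ _ (fun k => (if k %| p ^ b * r then Jd s k else 0) +
     (if c %| k then (if k %| c * r then Jd s k else 0) else 0))).
- rewrite rsum_plus. f_equal.
  + rewrite -/(Dsum s (c * r) (p ^ b * r)). apply Dsum_ext; first by rewrite muln_gt0 Hcb Hr.
    have : (p ^ b <= c)%N by rewrite /c expnS leq_pmull.
    have := leq_mul2r r (p ^ b) c. move=> H1 H2. have : (p ^ b * r <= c * r)%N by rewrite leq_mul2r H2 orbT.
    lia.
  + rewrite reindex //.
    rewrite (rsum_ext _ _ (fun t => Jd s c * (if t %| r then Jd s t else 0))).
    * by rewrite rsum_scal.
    * move=> t Ht. rewrite dvdn_pmul2l //. case Htr: (t %| r); last by ring.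
      rewrite Jd_mult //; first by lia.
      rewrite /c. apply: coprimeXl. by apply: (coprime_dvdr Htr).
- move=> k Hk. have Hk0 : (0 < k)%N by lia.
  have [E1 E2] := split_cases p r b k Pp Hpr Hk0.
  rewrite -/c in E1 E2. rewrite E1.
  case HY: (k %| p ^ b * r); case HZ: (c %| k); rewrite HY HZ in E2; simpl; try ring;
    try done; case: (k %| c * r); ring.
Qed.

Lemma Rpower_1_l s : Rpower 1 s = 1.
Proof. by rewrite /Rpower ln_1 Rmult_0_r exp_0. Qed.

Lemma Dsum_pow s p r a : prime p -> coprime p r -> (0 < r)%N ->
  Dsum s (p ^ a * r) (p ^ a * r) = Rpower (INR (p ^ a)) s * Dsum s r r.
Proof.
move=> Pp Hpr Hr. elim: a => [|b IH].
- rewrite expn0 mul1n /= Rpower_1_l. ring.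
- rewrite Dsum_step // IH Jd_pow //. ring.
Qed.

Lemma Dsum_one s : Dsum s 1 1 = 1.
Proof.
rewrite /Dsum /= /Jd /= /gf /= Rpower_1_l. ring.
Qed.

Lemma Jordan_sum s m : (0 < m)%N -> Dsum s m m = Rpower (INR m) s.
Proof.
elim/ltn_ind: m => m IH Hm.
case: (ltngtP m 1) => Hm1; [lia| |].
- have Pp := pdiv_prime Hm1. set p := pdiv m in Pp.
  case: (pfactor_coprime Pp Hm) => r Hpr Er.
  set e := logn p m in Er.
  have Hr : (0 < r)%N. { case: r Hpr Er => //. lia. }
  have He : (0 < e)%N. { rewrite /e logn_gt0 mem_primes Pp Hm /=. apply: pdiv_dvd. }
  have Hrm : (r < m)%N.
  { rewrite Er. rewrite -{1}(muln1 r) ltn_mul2l Hr /=.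
    have : (p <= p ^ e)%N. { case: e He {Er} => // e' _. by rewrite expnS leq_pmulr // expn_gt0 prime_gt0. }
    have := prime_gt1 Pp. lia. }
  rewrite Er mulnC Dsum_pow // IH // INR_muln Rpower_mult_distr //; apply INR_pos; by [rewrite expn_gt0 prime_gt0 | ].
- subst m. rewrite Dsum_one /= Rpower_1_l. done.
Qed.
Lemma gcd_bridge (i j : nat) : Nat.gcd i j = gcdn i j.
Proof.
apply Nat.gcd_unique.
- apply/dvdn_divide. apply dvdn_gcdl.
- apply/dvdn_divide. apply dvdn_gcdr.
- move=> q /dvdn_divide Hi /dvdn_divide Hj. apply/dvdn_divide. by rewrite dvdn_gcd Hi Hj.
Qed.

Lemma lcm_bridge (i j : nat) : Nat.lcm i j = lcmn i j.
Proof.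
apply Nat.Lcm0.lcm_unique.
- apply/dvdn_divide. apply dvdn_lcml.
- apply/dvdn_divide. apply dvdn_lcmr.
- move=> q /dvdn_divide Hi /dvdn_divide Hj. apply/dvdn_divide. by rewrite dvdn_lcm Hi Hj.
Qed.

Definition Emat' (i k : nat) : R := if k %| i then 1 else 0.

Lemma Emat_E i k : Emat i k = Emat' i k.
Proof. by rewrite /Emat /Emat' eqb_mod_dvdn. Qed.

Lemma gcd_sum s n i j : (1 <= i /\ i <= n)%coq_nat -> (1 <= j /\ j <= n)%coq_nat ->
  rsum n (fun k => Emat i k * Emat j k * Jordan s k) = Rpower (INR (Nat.gcd i j)) s.
Proof.
move=> Hi Hj. rewrite gcd_bridge.
have Hg : (0 < gcdn i j)%N by rewrite gcdn_gt0; apply/orP; left; lia.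
have Hgi : (gcdn i j <= i)%N by apply: dvdn_leq; [lia|apply dvdn_gcdl].
rewrite -Jordan_sum // -(Dsum_ext s n); [|done|lia].
rewrite /Dsum. apply rsum_ext => k Hk.
rewrite !Emat_E /Emat' Jordan_Jd dvdn_gcd.
case: (k %| i); case: (k %| j); simpl; ring.
Qed.

Definition dd (beta : R) (i : nat) : R := Rpower (INR i) beta.

Lemma Amat_fact alpha beta n i j : (1 <= i /\ i <= n)%coq_nat -> (1 <= j /\ j <= n)%coq_nat ->
  Amat alpha beta i j = dd beta i * dd beta j *
     rsum n (fun k => Emat i k * Emat j k * Jordan (alpha - beta) k).
Proof.
move=> Hi Hj. rewrite gcd_sum // /Amat /dd.
have Hg : (0 < gcdn i j)%N by rewrite gcdn_gt0; apply/orP; left; lia.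
have Hl : (0 < lcmn i j)%N by rewrite lcmn_gt0; apply/andP; split; apply/ltP; lia.
rewrite gcd_bridge lcm_bridge.
have E : Rpower (INR (gcdn i j)) alpha = Rpower (INR (gcdn i j)) (alpha - beta) * Rpower (INR (gcdn i j)) beta.
{ rewrite -Rpower_plus. f_equal. ring. }
rewrite E.
have E2 : Rpower (INR (gcdn i j)) beta * Rpower (INR (lcmn i j)) beta = Rpower (INR i) beta * Rpower (INR j) beta.
{ rewrite !Rpower_mult_distr; try (apply INR_pos; auto; apply/ltP; lia).
  by rewrite -!INR_muln mulnC muln_lcm_gcd. }
transitivity (Rpower (INR (gcdn i j)) (alpha - beta) * (Rpower (INR (gcdn i j)) beta * Rpower (INR (lcmn i j)) beta)); [ring|].
rewrite E2. ring.
Qed.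

Lemma exp_le_mono a b : a <= b -> exp a <= exp b.
Proof. move=> H. case: (Rle_lt_or_eq_dec a b H) => [H'|->]; [left; by apply exp_increasing|lra]. Qed.

Lemma ln_le_mono a b : 0 < a -> a <= b -> ln a <= ln b.
Proof. move=> Ha H. case: (Rle_lt_or_eq_dec a b H) => [H'|->]; [left; by apply ln_increasing|lra]. Qed.

Lemma Rpower_range (n i : nat) (c : R) : (1 <= i /\ i <= n)%coq_nat ->
  Rmin 1 (Rpower (INR n) c) <= Rpower (INR i) c <= Rmax 1 (Rpower (INR n) c).
Proof.
move=> Hi. have Hi1 : 1 <= INR i by apply (le_INR 1); lia.
have Hin : INR i <= INR n by apply le_INR; lia.
have L0 : 0 <= ln (INR i) by rewrite -ln_1; apply ln_le_mono; lra.
have L1 : ln (INR i) <= ln (INR n) by apply ln_le_mono; lra.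
rewrite /Rpower.
have Hm1 := Rmin_l 1 (exp (c * ln (INR n))). have Hm2 := Rmin_r 1 (exp (c * ln (INR n))).
have HM1 := Rmax_l 1 (exp (c * ln (INR n))). have HM2 := Rmax_r 1 (exp (c * ln (INR n))).
case: (Rle_lt_dec 0 c) => Hc.
- have A1 : exp 0 <= exp (c * ln (INR i)) by apply exp_le_mono; nra.
  have A2 : exp (c * ln (INR i)) <= exp (c * ln (INR n)) by apply exp_le_mono; nra.
  rewrite exp_0 in A1. lra.
- have A1 : exp (c * ln (INR i)) <= exp 0 by apply exp_le_mono; nra.
  have A2 : exp (c * ln (INR n)) <= exp (c * ln (INR i)) by apply exp_le_mono; nra.
  rewrite exp_0 in A1. lra.
Qed.
Definition yv n beta (u : nat -> R) k := rsum n (fun i => Emat i k * (dd beta i * u i)).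

Lemma qform alpha beta n u :
  bil n (Amat alpha beta) u u =
  rsum n (fun k => Jordan (alpha - beta) k * (yv n beta u k * yv n beta u k)).
Proof.
set s := alpha - beta.
set z := fun i => dd beta i * u i.
transitivity (rsum n (fun i => rsum n (fun j => rsum n (fun k =>
   (Emat i k * z i) * (Jordan s k * (Emat j k * z j)))))).
{ unfold bil. apply rsum_ext => i Hi. rewrite -rsum_scal. apply rsum_ext => j Hj.
  rewrite (Amat_fact alpha beta n i j Hi Hj) -/s.
  transitivity (u i * dd beta i * dd beta j * u j * rsum n (fun k => Emat i k * Emat j k * Jordan s k)); [ring|].
  rewrite -rsum_scal. apply rsum_ext => k Hk. rewrite /z. ring. }
rewrite (rsum_ext n _ (fun i => rsum n (fun k => rsum n (fun j =>
   (Emat i k * z i) * (Jordan s k * (Emat j k * z j)))))).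
2:{ move=> i Hi. apply rsum_swap. }
rewrite rsum_swap. apply rsum_ext => k Hk.
rewrite /yv -/z.
rewrite (rsum_ext n _ (fun i => (Emat i k * z i) * (Jordan s k * rsum n (fun j => Emat j k * z j)))).
2:{ move=> i Hi. by rewrite rsum_scal rsum_scal. }
rewrite rsum_scalr /z. ring.
Qed.

Lemma rmaxn_ge (n k : nat) (f : nat -> R) : (1 <= k /\ k <= n)%coq_nat -> f k <= rmaxn n f.
Proof.
elim: n => [|n IH] Hk; [lia|]. simpl.
case: (Nat.eq_dec k n.+1) => [->|Hne]; first by apply Rmax_r.
eapply Rle_trans; [apply IH; lia|apply Rmax_l].
Qed.

Lemma bound_J n s (y : nat -> R) :
  rsum n (fun k => Jordan s k * (y k * y k)) <= rmaxn n (fun i => Rabs (Jordan s i)) * nrm n y.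
Proof.
rewrite /nrm -rsum_scal. apply rsum_le => k Hk.
have H1 := rmaxn_ge n k (fun i => Rabs (Jordan s i)) Hk. simpl in H1.
have H2 := Rle_abs (Jordan s k). have H3 : 0 <= y k * y k by nra. nra.
Qed.

Definition Idm : rmat := fun i j => if Nat.eqb i j then 1 else 0.

Lemma bil_Idm n a b : bil n Idm a b = rsum n (fun i => a i * b i).
Proof.
rewrite /bil. apply rsum_ext => i Hi. rewrite /Idm.
rewrite rsum_delta_mul //. ring.
Qed.

Lemma CS_sum n a b : rsum n (fun i => a i * b i) * rsum n (fun i => a i * b i) <= nrm n a * nrm n b.
Proof.
rewrite -!bil_Idm /nrm -!bil_Idm. apply bil_CS.
- move=> i j Hi Hj. rewrite /Idm. case: (Nat.eqb_spec i j); case: (Nat.eqb_spec j i); try lia; done.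
- move=> w. rewrite bil_Idm. apply (nrm_nonneg n w).
Qed.

Lemma EtE_symm n : symm n (EtE n).
Proof. move=> i j Hi Hj. rewrite /EtE. apply rsum_ext => k Hk. ring. Qed.

Lemma Et_bound n T z : (1 <= n)%coq_nat -> is_largest_eigenvalue n (EtE n) T ->
  0 <= T /\ nrm n (fun k => rsum n (fun i => Emat i k * z i)) <= T * nrm n z.
Proof.
move=> Hn [_ HT].
have [mu [Hmu Hq]] := rayleigh n (EtE n) Hn (EtE_symm n).
have HmuT := HT mu Hmu.
have HQ : forall w, bil n (EtE n) w w <= T * nrm n w.
{ move=> w. have := Hq w. have := nrm_nonneg n w. nra. }
have HT0 : 0 <= T.
{ have := HQ e1. rewrite nrm_e1 //. move=> H.
  have : 0 <= bil n (EtE n) e1 e1; last by lra.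
  rewrite /bil. apply rsum_nonneg => i Hi. rewrite -rsum_scal. apply rsum_nonneg => j Hj.
  rewrite /EtE -rsum_scalr -rsum_scal. apply rsum_nonneg => k Hk.
  rewrite /e1 /Emat. case: (Nat.eqb 1 i); case: (Nat.eqb 1 j); case: (Nat.eqb (k mod i) 0); case: (Nat.eqb (k mod j) 0); lra. }
split; first done.
set y := fun k => rsum n (fun i => Emat i k * z i).
set v := fun i => rsum n (fun k => Emat i k * y k).
have E1 : nrm n y = rsum n (fun i => z i * v i).
{ rewrite /nrm /v.
  rewrite (rsum_ext n (fun k => y k * y k) (fun k => rsum n (fun i => z i * (Emat i k * y k)))).
  - rewrite rsum_swap. apply rsum_ext => i Hi. by rewrite rsum_scal.
  - move=> k Hk. rewrite {1}/y -rsum_scalr. apply rsum_ext => i Hi. ring. }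
clearbody y.
have E2 : nrm n v = bil n (EtE n) y y.
{ rewrite /nrm /bil /v /EtE.
  transitivity (rsum n (fun i => rsum n (fun k => rsum n (fun l => y k * (Emat i k * Emat i l * y l))))).
  { apply rsum_ext => i Hi. rewrite -rsum_scalr. apply rsum_ext => k Hk. rewrite -rsum_scal.
    apply rsum_ext => l Hl. ring. }
  rewrite rsum_swap. apply rsum_ext => k Hk. rewrite -rsum_scal.
  rewrite rsum_swap. apply rsum_ext => l Hl. rewrite -?rsum_scalr -?rsum_scal. apply rsum_ext => i Hi. ring. }
have HCS := CS_sum n z v. rewrite -E1 E2 in HCS.
have Hv := HQ y.
have Hz := nrm_nonneg n z. have Hy := nrm_nonneg n y.
case: (Rle_lt_or_eq_dec 0 (nrm n y) Hy) => Hy'.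
- have : nrm n y * nrm n y <= nrm n y * (T * nrm n z) by nra.
  move=> H. apply (Rmult_le_reg_l (nrm n y)); lra.
- rewrite -Hy'. nra.
Qed.
Lemma bil_minus_delta n (A : rmat) c a b :
  bil n (fun i j => A i j - (if Nat.eqb i j then c else 0)) a b = bil n A a b - c * rsum n (fun i => a i * b i).
Proof.
unfold bil. rewrite <- rsum_scal, <- rsum_minus. apply rsum_ext; intros i Hi.
rewrite (rsum_ext n _ (fun j => A i j * b j - (if Nat.eqb i j then c else 0) * b j)); [|intros; ring].
rewrite rsum_minus rsum_delta_mul; auto; ring.
Qed.

Lemma Amat_pos alpha beta i j : 0 < Amat alpha beta i j.
Proof. rewrite /Amat /Rpower. apply Rmult_lt_0_compat; apply exp_pos. Qed.

Lemma Amat_diag alpha beta i : Amat alpha beta i i = Rpower (INR i) (alpha + beta).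
Proof. by rewrite /Amat Nat.gcd_diag Nat.lcm_diag Rpower_plus. Qed.

Lemma quad_bound n alpha beta T u : (1 <= n)%coq_nat -> is_largest_eigenvalue n (EtE n) T ->
  bil n (Amat alpha beta) u u <=
  (T * Rmax 1 (Rpower (INR n) (2 * beta)) * rmaxn n (fun i => Rabs (Jordan (alpha - beta) i))) * nrm n u.
Proof.
move=> Hn HT.
set mJ := rmaxn n (fun i => Rabs (Jordan (alpha - beta) i)).
set dmax := Rmax 1 (Rpower (INR n) (2 * beta)).
have HmJ : 0 <= mJ.
{ have := rmaxn_ge n 1 (fun i => Rabs (Jordan (alpha - beta) i)) ltac:(lia). simpl.
  have := Rabs_pos (Jordan (alpha - beta) 1). rewrite /mJ. lra. }
set z := fun i => dd beta i * u i.
have [HT0 Hy] := Et_bound n T z Hn HT.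
have Hz : nrm n z <= dmax * nrm n u.
{ rewrite /nrm -rsum_scal. apply rsum_le => i Hi. rewrite /z /dd.
  have E : Rpower (INR i) beta * u i * (Rpower (INR i) beta * u i) = Rpower (INR i) (2 * beta) * (u i * u i).
  { have -> : 2 * beta = beta + beta by ring. rewrite Rpower_plus. ring. }
  rewrite E. have [_ H] := Rpower_range n i (2 * beta) Hi. have : 0 <= u i * u i by nra.
  rewrite /dmax. nra. }
rewrite qform.
have H1 := bound_J n (alpha - beta) (yv n beta u). fold mJ in H1.
change (yv n beta u) with (fun k => rsum n (fun i => Emat i k * z i)) in H1.
have Hu := nrm_nonneg n u.
have H2 : mJ * nrm n (fun k => rsum n (fun i => Emat i k * z i)) <= mJ * (T * nrm n z) by apply Rmult_le_compat_l.
have H3 : mJ * (T * nrm n z) <= mJ * (T * (dmax * nrm n u)).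
{ apply Rmult_le_compat_l; auto. apply Rmult_le_compat_l; auto. }
have E3 : mJ * (T * (dmax * nrm n u)) = T * dmax * mJ * nrm n u by ring.
change (yv n beta u) with (fun k => rsum n (fun i => Emat i k * z i)).
lra.
Qed.

Theorem theorem3p2 (n : nat) (alpha beta : R) (Tn : R) :
  (1 <= n)%coq_nat ->
  is_largest_eigenvalue n (EtE n) Tn ->
  forall lam : R, is_eigenvalue n (Amat alpha beta) lam ->
  let M := Tn * Rmax 1 (Rpower (INR n) (2 * beta)) *
           rmaxn n (fun i => Rabs (Jordan (alpha - beta) i)) in
  2 * Rmin 1 (Rpower (INR n) (alpha + beta)) - M <= lam <= M.
Proof.
move=> Hn HT lam [x [[i0 [Hi0 Hx0]] Heig]] M.
set m0 := Rmin 1 (Rpower (INR n) (alpha + beta)).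
set A := Amat alpha beta.
set B := fun i j => A i j - (if Nat.eqb i j then m0 else 0).
set u := fun i => Rabs (x i).
have HQ := quad_bound n alpha beta Tn u Hn HT. fold M A in HQ.
have HB : forall i j, (1 <= i /\ i <= n)%coq_nat -> 0 <= B i j.
{ move=> i j Hi. rewrite /B. case: (Nat.eqb_spec i j) => E.
  - subst j. rewrite /A Amat_diag. have [H _] := Rpower_range n i (alpha + beta) Hi. rewrite /m0. lra.
  - have := Amat_pos alpha beta i j. rewrite /A. lra. }
have Hrow : forall i, (1 <= i /\ i <= n)%coq_nat ->
  Rabs (lam - m0) * u i <= rsum n (fun j => B i j * u j).
{ move=> i Hi.
  have E : rsum n (fun j => B i j * x j) = (lam - m0) * x i.
  { rewrite /B (rsum_ext n _ (fun j => A i j * x j - (if Nat.eqb i j then m0 else 0) * x j)); [|move=> *; ring].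
    rewrite rsum_minus rsum_delta_mul // Heig //. ring. }
  rewrite /u -Rabs_mult -E. eapply Rle_trans; [apply rsum_abs|].
  apply rsum_le => j Hj. rewrite Rabs_mult Rabs_right; [lra|]. apply Rle_ge. by apply HB. }
have Hsum : Rabs (lam - m0) * nrm n u <= bil n B u u.
{ rewrite /nrm -rsum_scal /bil. apply rsum_le => i Hi.
  have := Hrow i Hi. have : 0 <= u i by apply Rabs_pos. nra. }
rewrite /B bil_minus_delta in Hsum. fold (nrm n u) in Hsum.
have Hpos : 0 < nrm n u.
{ have := nrm_coord n u i0 Hi0. rewrite /u.
  have : 0 < Rabs (x i0) by apply Rabs_pos_lt.
  move=> H1 H2. nra. }
have Hfin : Rabs (lam - m0) <= M - m0.
{ apply (Rmult_le_reg_r (nrm n u)); auto. lra. }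
have Hm0 : m0 <= 1 by apply Rmin_l.
apply Rabs_le_inv in Hfin. split; lra.
Qed.
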